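(* Let $k$ be an étale cubic algebra over $\mathbb{Q}$ and $f$ a square free positive integer such that no prime number dividing $f$ is of type $3$ in $k$. Then for each ideal $\mathfrak{f}$ of $\mathcal{O}_k$ with $f\mathcal{O}_k\subset\mathfrak{f}$ and $N(\mathfrak{f})=f^2$, there exists exactly one order $R$ of index $f$ in $\mathcal{O}_k$ whose conductor is $\mathfrak{f}$, namely $R=\mathbb{Z}+\mathfrak{f}$.
   Context: An étale cubic algebra is a direct sum of number fields with total degree $3$; $\mathcal{O}_k$ is its maximal order; an order is a finite-index subring with unit of $\mathcal{O}_k$, and its conductor is the largest $\mathcal{O}_k$-ideal contained in it. $N(\mathfrak{f})=(\mathcal{O}_k:\mathfrak{f})$. A prime $p$ is of type $3$ in $k$ if $k$ is a cubic field in which $p$ is inert (i.e. $p\mathcal{O}_k$ is prime of norm $p^3$). *)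

(* Defs.v *)
From HB Require Import structures.
From mathcomp Require Import all_boot all_order all_algebra all_field.
Set Implicit Arguments. Unset Strict Implicit. Unset Printing Implicit Defensive.
Import Order.TTheory GRing.Theory Num.Theory.
Local Open Scope ring_scope.

(* An etale cubic Q-algebra: a finite-dimensional Q-algebra L, commutative,
   of dimension 3, and reduced (no nonzero nilpotents); over Q (perfect) this
   is exactly a finite product of number fields of total degree 3. *)
Definition etale_cubic (L : falgType rat) : Prop :=
  [/\ (forall x y : L, x * y = y * x),
      \dim (fullv : {vspace L}) = 3%N &
      (forall x : L, x ^+ 2 = 0 -> x = 0)].

Definition Ok (L : falgType rat) (x : L) : Prop :=
  exists p : {poly int}, p \is monic /\
    (map_poly (fun z : int => z%:~R : L) p).[x] = 0.

Definition has_index (L : falgType rat) (B A : L -> Prop) (n : nat) : Prop :=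
  exists s : seq L, size s = n /\
    (forall i, (i < n)%N -> B (nth 0 s i)) /\
    (forall x, B x -> exists! i : nat, (i < n)%N /\ A (x - nth 0 s i)).

Definition is_Ok_ideal (L : falgType rat) (I : L -> Prop) : Prop :=
  [/\ (forall x, I x -> Ok x), I 0,
      (forall x y, I x -> I y -> I (x - y)) &
      (forall a x, Ok a -> I x -> I (a * x))].

Definition ideal_norm_is (L : falgType rat) (I : L -> Prop) (n : nat) : Prop :=
  has_index (@Ok L) I n.

Definition is_prime_Ok_ideal (L : falgType rat) (I : L -> Prop) : Prop :=
  [/\ is_Ok_ideal I, (exists x, Ok x /\ ~ I x) &
      (forall a b, Ok a -> Ok b -> I (a * b) -> I a \/ I b)].

Definition is_order (L : falgType rat) (R : L -> Prop) : Prop :=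
  [/\ (forall x, R x -> Ok x), R 1,
      (forall x y, R x -> R y -> R (x - y)),
      (forall x y, R x -> R y -> R (x * y)) &
      exists n, has_index (@Ok L) R n].

Definition is_conductor (L : falgType rat) (R F : L -> Prop) : Prop :=
  [/\ is_Ok_ideal F, (forall x, F x -> R x) &
      (forall I, is_Ok_ideal I -> (forall x, I x -> R x) -> forall x, I x -> F x)].

Definition pOk (L : falgType rat) (p : nat) (x : L) : Prop :=
  exists y, Ok y /\ x = p%:R * y.

Definition type3 (L : falgType rat) (p : nat) : Prop :=
  [/\ (forall x : L, x != 0 -> x \is a GRing.unit),
      is_prime_Ok_ideal (@pOk L p) &
      ideal_norm_is (@pOk L p) (p ^ 3)%N].

Definition squarefree (n : nat) : Prop :=
  forall p, prime p -> ~~ (p ^ 2 %| n)%N.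

Definition Zplus (L : falgType rat) (F : L -> Prop) (x : L) : Prop :=
  exists z : int, F (x - z%:~R).

(* Main.v *)
Require Import Defs.
From HB Require Import structures.
From mathcomp Require Import all_boot all_order all_algebra all_field all_fingroup all_solvable.
From mathcomp Require Import ring.
From Stdlib Require Import ClassicalEpsilon Classical.
Set Implicit Arguments. Unset Strict Implicit. Unset Printing Implicit Defensive.
Import Order.TTheory GRing.Theory Num.Theory FinRing.Theory.
Lemma no_pdiv_surj (gT : finGroupType) (K : {group gT}) p : prime p -> (p %| #|K|)%N ->
  (forall x, x \in K -> exists2 y, y \in K & x = (y ^+ p)%g) -> False.
Proof.
move=> pp pK hs.
have [x xK ox] := Cauchy pp pK.
have img : ((fun y => y ^+ p)%g @: K) = K.
  apply/setP=> z; apply/imsetP/idP => [[y yK ->]|zK]; first exact: groupX.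
  by have [y yK ->] := hs z zK; exists y.
have /imset_injP inj : #|(fun y => y ^+ p)%g @: K| == #|K| by rewrite img.
have : x = 1%g by apply: inj => //; rewrite expg1n -ox expg_order.
move=> x1; move: ox; rewrite x1 order1 => p1; move: pp; by rewrite -p1.
Qed.
Lemma sqf_dvd f m : (0 < f)%N -> (forall p, prime p -> ~~ (p ^ 2 %| f))%N ->
  (forall p, prime p -> p %| f -> p %| m)%N -> (f %| m)%N.
Proof.
have [n] := ubnP f; elim: n f => [|n IH] f lef f0 sq hp; first by [].
case: (ltngtP f 1) => [|f1|->]; last by rewrite dvd1n.
  by rewrite ltnS leqn0 (gtn_eqF f0).
have pp := pdiv_prime f1; have pd := pdiv_dvd f.
move: pp pd; set q := pdiv f => pp pd.
have [f' def] : exists f', f = (q * f')%N by exists (f %/ q); rewrite mulnC divnK.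
have f'0 : (0 < f')%N by move: f0; rewrite def muln_gt0 => /andP[].
have npf' : ~~ (q %| f')%N.
  apply/negP=> d; have := sq _ pp; rewrite def -mulnn dvdn_pmul2l ?d //.
  exact: prime_gt0.
have cop : coprime q f' by rewrite prime_coprime.
rewrite def Gauss_dvd // hp // IH //.
- by rewrite -ltnS (leq_trans _ lef) // ltnS def ltn_Pmull ?prime_gt1.
- move=> p pr; apply/negP => d; have := sq p pr; rewrite def.
  by rewrite (dvdn_trans d) ?dvdn_mull.
- by move=> p pr d; apply: hp => //; rewrite def dvdn_mull.
Qed.
Local Open Scope ring_scope.
Definition comL (R : nzRingType) (h : commutative (@GRing.mul R)) : Type := R.
HB.instance Definition _ R h := GRing.NzRing.on (@comL R h).
HB.instance Definition _ R h := GRing.Ring_hasCommutativeMul.Build (@comL R h) h.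

Section OkRing.
Variable L : falgType rat.
Hypothesis hC : commutative (@GRing.mul L).

Lemma Ok_integral (x : L) : Ok x <-> integralOver (intr : int -> comL hC) (x : comL hC).
Proof.
split=> [[p [mp px]]|[p mp px]]; first by exists p => //; apply/rootP.
by exists p; split=> //; apply/rootP.
Qed.

Lemma Ok_add (x y : L) : Ok x -> Ok y -> Ok (x + y).
Proof. move=> /Ok_integral hx /Ok_integral hy; apply/Ok_integral; exact: integral_add. Qed.
Lemma Ok_sub (x y : L) : Ok x -> Ok y -> Ok (x - y).
Proof. move=> /Ok_integral hx /Ok_integral hy; apply/Ok_integral; exact: integral_sub. Qed.
Lemma Ok_mul (x y : L) : Ok x -> Ok y -> Ok (x * y).
Proof. move=> /Ok_integral hx /Ok_integral hy; apply/Ok_integral; exact: integral_mul. Qed.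
Lemma Ok_int (z : int) : Ok (z%:~R : L).
Proof. apply/Ok_integral; exact: (integral_id (intr : {rmorphism int -> comL hC}) z). Qed.
Lemma Ok_opp (x : L) : Ok x -> Ok (- x).
Proof. move=> /Ok_integral hx; apply/Ok_integral; exact: integral_opp. Qed.
End OkRing.

Section Quot.
Variable L : falgType rat.
Hypothesis hC : commutative (@GRing.mul L).
Variable F : L -> Prop.
Hypothesis FI : is_Ok_ideal F.
Variable N : nat.
Hypothesis N0 : (0 < N)%N.
Variable t : seq L.
Hypothesis tS : size t = N.
Hypothesis tOk : forall i, (i < N)%N -> Ok (nth 0 t i).
Hypothesis tU : forall x, Ok x -> exists! i : nat, (i < N)%N /\ F (x - nth 0 t i).

Lemma FOk x : F x -> Ok x. Proof. by case: FI => h _ _ _; apply: h. Qed.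
Lemma F0 : F 0. Proof. by case: FI. Qed.
Lemma FB x y : F x -> F y -> F (x - y). Proof. by case: FI => _ _ h _; apply: h. Qed.
Lemma FM a x : Ok a -> F x -> F (a * x). Proof. by case: FI => _ _ _ h; apply: h. Qed.
Lemma FN x : F x -> F (- x). Proof. by move=> h; rewrite -sub0r; apply: FB => //; apply: F0. Qed.
Lemma FD x y : F x -> F y -> F (x + y).
Proof. by move=> hx hy; rewrite -[y]opprK; apply: FB => //; apply: FN. Qed.
Lemma FZ (z : int) x : F x -> F (z%:~R * x). Proof. by move=> h; apply: FM => //; apply: Ok_int. Qed.
Lemma Fe x y : x = y -> F x -> F y. Proof. by move=> ->. Qed.


Definition Q : Type := 'I_N.
HB.instance Definition _ := Finite.on Q.
Definition tt (i : Q) := nth 0 t i.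
Lemma ttOk i : Ok (tt i). Proof. exact: tOk. Qed.

Definition cls (x : L) : Q :=
  epsilon (inhabits (Ordinal N0 : Q)) (fun i : Q => F (x - tt i)).

Lemma clsP x : Ok x -> F (x - tt (cls x)).
Proof.
move=> ox; rewrite /cls; apply: (epsilon_spec (inhabits (Ordinal N0 : Q)) (fun i : Q => F (x - tt i))).
by have [i [[iN Fi] _]] := tU ox; exists (Ordinal iN).
Qed.

Lemma cls_uniq x (i : Q) : Ok x -> F (x - tt i) -> cls x = i.
Proof.
move=> ox Fi; have [j [_ uj]] := tU ox; apply: val_inj => /=.
rewrite -(uj (cls x)) ?(uj i) //; split=> //; exact: clsP.
Qed.

Lemma clsE x y : Ok x -> Ok y -> cls x = cls y <-> F (x - y).
Proof.
move=> ox oy; split=> [e|Fxy].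
  have := FB (clsP ox) (clsP oy); rewrite e; apply: Fe.
  by rewrite opprB addrA subrK.
apply: cls_uniq => //; have := FD Fxy (clsP oy); apply: Fe.
by rewrite addrA subrK.
Qed.

Lemma cls_tt i : cls (tt i) = i.
Proof. by apply: cls_uniq; [apply: ttOk | rewrite subrr; apply: F0]. Qed.

Lemma cls_cong x : Ok x -> cls (tt (cls x)) = cls x.
Proof. by move=> ox; rewrite cls_tt. Qed.


Definition qadd (i j : Q) : Q := cls (tt i + tt j).
Definition qopp (i : Q) : Q := cls (- tt i).
Definition qzero : Q := cls 0.

Lemma ttcls x : Ok x -> F (tt (cls x) - x).
Proof. by move=> ox; rewrite -opprB; apply: FN; apply: clsP. Qed.

Lemma addid1 (R : comNzRingType) (a b c d e : R) :
  d - (b + c) - (e - (a + b)) = a + d - (e + c).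
Proof. by ring. Qed.

Lemma addid2 (R : comNzRingType) (a b c d e : R) :
  c - a + (d - b) = c + d - (a + b).
Proof. by ring. Qed.

Lemma qaddA : associative qadd.
Proof.
move=> i j k; rewrite /qadd; apply/clsE; try by apply: Ok_add => //; apply: ttOk.
have h1 := ttcls (Ok_add hC (ttOk i) (ttOk j)).
have h2 := ttcls (Ok_add hC (ttOk j) (ttOk k)).
have := FB h2 h1; apply: Fe; rewrite /qadd.
exact: (@addid1 (comL hC)).
Qed.

Lemma qaddC : commutative qadd.
Proof. by move=> i j; rewrite /qadd addrC. Qed.

Lemma qadd0 : left_id qzero qadd.
Proof.
move=> i; rewrite /qadd /qzero; apply: cls_uniq.
  by apply: Ok_add => //; apply: ttOk.
have := ttcls (Ok_int hC 0); apply: Fe; by rewrite addrK subr0.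
Qed.

Lemma qaddN : left_inverse qzero qopp qadd.
Proof.
move=> i; rewrite /qadd /qopp /qzero; apply/clsE; first by apply: Ok_add => //; apply: ttOk.
  exact: (Ok_int hC 0).
have := ttcls (Ok_sub hC (Ok_int hC 0) (ttOk i)); apply: Fe; by rewrite sub0r opprK subr0.
Qed.

HB.instance Definition _ := GRing.isZmodule.Build Q qaddA qaddC qadd0 qaddN.
HB.instance Definition _ := [finGroupMixin of Q for +%R].

Lemma cls_add x y : Ok x -> Ok y -> (cls x : Q) + (cls y : Q) = cls (x + y).
Proof.
move=> ox oy; apply/clsE => //; try by apply: Ok_add => //; apply: ttOk.
have := FD (ttcls ox) (ttcls oy).
apply: Fe; exact: (@addid2 (comL hC)).
Qed.

Lemma cls_opp x : Ok x -> - (cls x : Q) = cls (- x).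
Proof.
move=> ox; apply: (addrI (cls x : Q)); rewrite subrr cls_add ?subrr //.
exact: Ok_opp.
Qed.

Lemma cls_sub x y : Ok x -> Ok y -> (cls x : Q) - cls y = cls (x - y).
Proof. by move=> ox oy; rewrite cls_opp // cls_add //; apply: Ok_opp. Qed.

Lemma Ok_nat n : @Ok L n%:R.
Proof. by have := Ok_int hC n; rewrite pmulrn. Qed.

Lemma Ok_muln (x : L) n : Ok x -> Ok (x *+ n).
Proof. by move=> ox; rewrite -mulr_natl; apply: Ok_mul => //; apply: Ok_nat. Qed.

Lemma cls_muln (x : L) n : Ok x -> (cls x : Q) *+ n = cls (x *+ n).
Proof.
move=> ox; elim: n => [|n IH]; first by rewrite !mulr0n.
by rewrite !mulrS IH cls_add //; apply: Ok_muln.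
Qed.

Lemma cls_tt' (i : Q) : cls (tt i) = i. Proof. exact: cls_tt. Qed.

Lemma ZpF x : F x -> Zplus F x.
Proof. by move=> h; exists 0; rewrite mulr0z subr0. Qed.

Lemma Zp_int (z : int) : Zplus F z%:~R.
Proof. by exists z; rewrite subrr; apply: F0. Qed.

Lemma ZpD x y : Zplus F x -> Zplus F y -> Zplus F (x + y).
Proof.
move=> [a ha] [b hb]; exists (a + b); have := FD ha hb; apply: Fe.
by rewrite intrD opprD addrACA.
Qed.

Lemma ZpN x : Zplus F x -> Zplus F (- x).
Proof. by move=> [a ha]; exists (- a); have := FN ha; apply: Fe; rewrite intrN opprB opprK addrC. Qed.

Lemma ZpB x y : Zplus F x -> Zplus F y -> Zplus F (x - y).
Proof. by move=> hx hy; apply: ZpD => //; apply: ZpN. Qed.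

Lemma ZpOk x : Zplus F x -> Ok x.
Proof. by move=> [a ha]; rewrite -(subrK a%:~R x); apply: Ok_add => //; [apply: FOk | apply: Ok_int]. Qed.

Lemma ZpM x y : Zplus F x -> Zplus F y -> Zplus F (x * y).
Proof.
move=> hx hy; have oy := ZpOk hy; move: hx hy => [a ha] [b hb]; exists (a * b).
have := FD (FM oy ha) (FZ a hb); apply: Fe.
by rewrite intrM mulrBr mulrBr [y * x]hC [y * _]hC addrA subrK.
Qed.

Lemma ZpZ (k : int) x : Zplus F x -> Zplus F (k%:~R * x).
Proof. by move=> hx; apply: ZpM => //; apply: Zp_int. Qed.

Variable f : nat.
Hypothesis f0 : (0 < f)%N.
Hypothesis fsq : squarefree f.
Hypothesis fF : forall x, Ok x -> F (f%:R * x).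
Hypothesis NE : N = (f ^ 2)%N.

Lemma Ff : F f%:R.
Proof. by have := fF (Ok_nat 1); rewrite mulr1. Qed.

Lemma idq (R : comNzRingType) (y : R) (q n f' : int) :
  y - (q * f' + n)%:~R + q%:~R * f'%:~R = y - n%:~R.
Proof. rewrite intrD intrM; ring. Qed.

Lemma ZplusN y : Zplus F y <-> exists n : nat, F (y - n%:R).
Proof.
split=> [[z hz]|[n hn]]; last by exists n; rewrite -pmulrn.
have fn0 : (f%:Z != 0) by rewrite eqz_nat -lt0n.
exists `|(z %% f%:Z)%Z|%N.
have e : z = (z %/ f%:Z)%Z * f%:Z + (`|(z %% f%:Z)%Z|%N)%:Z.
  by rewrite gez0_abs ?modz_ge0 // -divz_eq.
have := FD hz (FZ (z %/ f%:Z)%Z Ff); set q := (z %/ f%:Z)%Z.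
rewrite {1}e; apply: Fe.
exact: (@idq (comL hC) y q (Posz `|(z %% f%:Z)%Z|%N) (Posz f)).
Qed.

Definition c : Q := cls 1.
Definition H : {group Q} := (<[c]>)%G.

Lemma cXn n : (c ^+ n)%g = cls n%:R.
Proof. by rewrite zmodXgE /c cls_muln //; apply: Ok_nat 1. Qed.

Lemma normH : [set: Q] \subset 'N(H)%g.
Proof. exact: sub_abelian_norm (zmod_abelian _) (subsetT _). Qed.

Lemma inN (x : Q) : x \in 'N(H)%g.
Proof. exact: subsetP normH x (in_setT x). Qed.

Lemma cosetE x y : Ok x -> Ok y ->
  (Zplus F (x - y) <-> coset H (cls x) = coset H (cls y)).
Proof.
move=> ox oy; split.
  move/ZplusN => [n hn]; apply/rcoset_kercosetP; try exact: inN.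
  apply/rcosetP; exists (c ^+ n)%g; first exact: mem_cycle.
  rewrite cXn zmodMgE (cls_add (Ok_nat n) oy); apply: (proj2 (clsE ox (Ok_add hC (Ok_nat n) oy))).
  by have := hn; apply: Fe; rewrite opprD addrA addrAC.
move/rcoset_kercosetP => /(_ (inN _) (inN _)) /rcosetP [a /cycleP [n ->]].
rewrite cXn zmodMgE (cls_add (Ok_nat n) oy) => e.
have h := proj1 (clsE ox (Ok_add hC (Ok_nat n) oy)) e; apply/ZplusN; exists n.
move: h; apply: Fe; by rewrite opprD addrA addrAC.
Qed.

Lemma bez_id (R : comNzRingType) (u v : int) (d p : nat) (a : R) :
  u * d%:Z + v * p%:Z = 1 -> a - (v%:~R * a) *+ p = u%:~R * (d%:R * a).
Proof.
move=> e; have e' : (u%:~R * d%:R + v%:~R * p%:R : R) = 1.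
  by rewrite !pmulrn -!intrM -intrD e.
have -> : a - (v%:~R * a) *+ p = (u%:~R * d%:R + v%:~R * p%:R) * a - (v%:~R * a) *+ p.
  by rewrite e' mul1r.
ring.
Qed.

Lemma Ok0 : @Ok L 0. Proof. by have := Ok_nat 0; rewrite mulr0n. Qed.

Lemma cF n : (c ^+ n)%g = 1%g <-> F n%:R.
Proof.
rewrite cXn zmod1gE; have := clsE (Ok_nat n) Ok0; rewrite subr0 => <-; done.
Qed.

Lemma cardQ : #|[set: Q]| = N.
Proof. by rewrite cardsT card_ord. Qed.

Lemma ppow_cls (p : nat) (v : int) (x : Q) :
  ((cls (v%:~R * tt x)%R) ^+ p)%g = cls ((v%:~R * tt x) *+ p).
Proof. by rewrite zmodXgE cls_muln //; apply: Ok_mul => //; [apply: Ok_int | apply: ttOk]. Qed.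

Lemma ord_c : (#[c])%g = f.
Proof.
have hd : F ((#[c])%g)%:R by apply/cF; exact: expg_order.
have dvd1 : ((#[c])%g %| f)%N by rewrite order_dvdn; apply/eqP/cF; exact: Ff.
apply/eqP; rewrite eqn_dvd dvd1 /=.
apply: sqf_dvd f0 fsq _ => p pp pf.
apply/negPn/negP => npd.
have cop : coprime (#[c])%g p by rewrite coprime_sym prime_coprime.
have [u [v e]] := Bezoutz (#[c])%g%:Z p%:Z.
move: e; rewrite /gcdz /= (eqP cop) => e.
apply: (@no_pdiv_surj _ [set: Q]%G p pp).
  by rewrite cardQ NE (expnS f 1) expn1 dvdn_mulr.
move=> x _; exists (cls (v%:~R * tt x)); first by rewrite in_setT.
rewrite ppow_cls -{1}(cls_tt x); apply/clsE.
- exact: ttOk.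
- by apply: Ok_muln; apply: Ok_mul => //; [apply: Ok_int | apply: ttOk].
rewrite (@bez_id (comL hC) u v _ _ _ e); apply: FZ.
by rewrite hC; apply: FM => //; apply: ttOk.
Qed.

Lemma card_cosets : #|{: coset_of H}| = f.
Proof.
have L1 := Lagrange (subsetT H).
rewrite -cardsT -quotientT card_quotient ?normH //.
move: L1; rewrite cardQ NE /= -/(#[c])%g ord_c (expnS f 1) expn1 => /eqP.
by rewrite eqn_pmul2l // => /eqP.
Qed.

Definition sZ : seq L := [seq tt (repr (set_of_coset W)) | W <- enum {: coset_of H}].

Lemma sZ_nth j : (j < f)%N ->
  nth 0 sZ j = tt (repr (set_of_coset (nth 1%g (enum {: coset_of H}) j))).
Proof. by move=> jf; rewrite (nth_map 1%g) // -cardT card_cosets. Qed.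

Lemma sZ_key x j : Ok x -> (j < f)%N ->
  (Zplus F (x - nth 0 sZ j) <-> coset H (cls x) = nth 1%g (enum {: coset_of H}) j).
Proof.
move=> ox jf; rewrite sZ_nth //; rewrite cosetE //; last exact: ttOk.
by rewrite cls_tt coset_reprK.
Qed.

Lemma index_Zplus : has_index (@Ok L) (Zplus F) f.
Proof.
exists sZ; split; first by rewrite size_map -cardT card_cosets.
split; first by move=> i lt; rewrite sZ_nth //; apply: ttOk.
move=> x ox; set W := coset H (cls x).
have Wm : W \in enum {: coset_of H} by rewrite mem_enum.
have il : (index W (enum {: coset_of H}) < f)%N by rewrite -card_cosets cardT index_mem.
exists (index W (enum {: coset_of H})); split.
  by split=> //; apply/sZ_key => //; rewrite nth_index.
move=> j [jf /(sZ_key ox jf) e]; rewrite /W e index_uniq ?enum_uniq //.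
by rewrite -cardT card_cosets.
Qed.

Lemma lincomb (R : comNzRingType) (al be z f' : int) (a : R) :
  (al * z + be * f')%:~R * a = al%:~R * (z%:~R * a) + be%:~R * (f'%:~R * a).
Proof. rewrite intrD !intrM; ring. Qed.

Lemma cond_key (z : int) : (forall a, Ok a -> Zplus F (z%:~R * a)) -> F z%:~R.
Proof.
move=> hz.
case: (boolP (f %| `|z|)%N) => fz.
  have fz' : (f%:Z %| z)%Z by [].
  rewrite -(divzK fz') intrM; apply: FZ; rewrite -pmulrn; exact: Ff.
set g := gcdn `|z| f.
have [[p [pp [pf npg]]]|nex] :=
  classic (exists p, prime p /\ (p %| f)%N /\ ~~ (p %| g)%N); last first.
  case/negP: fz; apply: dvdn_trans (dvdn_gcdl `|z| f).
  apply: sqf_dvd f0 fsq _ => p pp pf; apply/negPn/negP => npg.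
  by apply: nex; exists p.
have cop : coprime g p by rewrite coprime_sym prime_coprime.
have [u [v e]] := Bezoutz g%:Z p%:Z.
move: e; rewrite /gcdz /= (eqP cop) => e.
have [al [be eg]] := Bezoutz z f%:Z.
have Zg a : Ok a -> Zplus F (g%:R * a).
  move=> oa; have -> : g%:R * a = al%:~R * (z%:~R * a) + be%:~R * (f%:R * a).
    by rewrite pmulrn -[g%:Z]eg (@lincomb (comL hC)).
  by apply: ZpD; apply: ZpZ; [apply: hz | apply: ZpF; apply: fF].
exfalso; apply: (@no_pdiv_surj _ [set: coset_of H]%G p pp).
  by rewrite cardsT card_cosets.
move=> W _; set y := repr (set_of_coset W); set w := tt y.
exists (coset H (cls (v%:~R * w))); first by rewrite in_setT.
rewrite -morphX ?inN //= ppow_cls -{1}(coset_reprK W) -/y -(cls_tt y) -/w.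
apply/cosetE; first exact: ttOk.
  by apply: Ok_muln; apply: Ok_mul => //; [apply: Ok_int | apply: ttOk].
rewrite /w cls_tt (@bez_id (comL hC) u v _ _ _ e); apply: ZpZ; apply: Zg; exact: ttOk.
Qed.
End Quot.

Lemma index_sub (L : falgType rat) (hC : commutative (@GRing.mul L)) (A B : L -> Prop) n
  (n0 : (0 < n)%N) :
  (forall x, A x -> B x) -> (forall x, B x -> Ok x) ->
  (forall x y, B x -> B y -> B (x - y)) -> (forall x y, A x -> A y -> A (x - y)) ->
  has_index (@Ok L) A n -> has_index (@Ok L) B n -> forall x, B x -> A x.
Proof.
move=> AB BOk Bsub Asub [s [sS [sOk sU]]] [r [rS [rOk rU]]] x Bx.
have B0 : B 0 by rewrite -(subrr x); apply: Bsub.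
have BN y : B y -> B (- y) by move=> h; rewrite -sub0r; apply: Bsub.
pose phi (i : 'I_n) : 'I_n := epsilon (inhabits (Ordinal n0)) (fun j : 'I_n => B (nth 0 s i - nth 0 r j)).
have phiP (i : 'I_n) : B (nth 0 s i - nth 0 r (phi i)).
  apply: (epsilon_spec (inhabits (Ordinal n0)) (fun j : 'I_n => B (nth 0 s i - nth 0 r j))).
  by have [j [[jn hj] _]] := rU _ (sOk _ (ltn_ord i)); exists (Ordinal jn).
have phiU (i j : 'I_n) : B (nth 0 s i - nth 0 r j) -> phi i = j.
  move=> h; have [k [_ uk]] := rU _ (sOk _ (ltn_ord i)); apply: val_inj => /=.
  by rewrite -(uk j) ?(uk (phi i)) //; split=> //; apply: phiP.
have surj : phi @: [set: 'I_n] = [set: 'I_n].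
  apply/setP=> j; rewrite in_setT; apply/imsetP.
  have [i [[iN hi] _]] := sU _ (rOk _ (ltn_ord j)).
  exists (Ordinal iN); first by rewrite in_setT.
  by apply/esym/phiU; rewrite -opprB; apply/BN/AB.
have /imset_injP inj : #|phi @: [set: 'I_n]| == #|[set: 'I_n]| by rewrite surj.
have ox := BOk _ Bx; have o0 := BOk _ B0.
have [i0 [[i0n h0] _]] := sU _ ox.
have [i1 [[i1n h1] _]] := sU _ o0.
have Bs0 : B (nth 0 s i0).
  by have := Bsub _ _ Bx (AB _ h0); rewrite opprB addrCA subrr addr0.
have Bs1 : B (nth 0 s i1).
  by have := BN _ (AB _ h1); rewrite sub0r opprK.
have e : phi (Ordinal i0n) = phi (Ordinal i1n).
  apply: phiU => /=.
  have := Bsub _ _ (Bsub _ _ Bs0 Bs1) (BN _ (phiP (Ordinal i1n))); rewrite /=.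
  by rewrite opprK addrA subrK.
have ei : i0 = i1 by have := inj _ _ (in_setT _) (in_setT _) e => -[].
have := Asub _ _ h0 h1; rewrite ei sub0r opprK subrK; done.
Qed.

Lemma R_int (L : falgType rat) (R : L -> Prop) : R 1 ->
  (forall x y, R x -> R y -> R (x - y)) -> forall z : int, R z%:~R.
Proof.
move=> R1 Rsub.
have R0 : R 0 by rewrite -(subrr 1); apply: (Rsub).
have Rn (n : nat) : R n%:R.
  elim: n => [|n IH]; first by rewrite mulr0n.
  by rewrite mulrS -[n%:R]opprK; apply: (Rsub) => //; rewrite -sub0r; apply: (Rsub).
case=> n; first by rewrite -pmulrn; apply: Rn.
by rewrite NegzE mulrNz -sub0r; apply: (Rsub) => //; rewrite -pmulrn; apply: Rn.
Qed.

Lemma proposition2p7_aux (L : falgType rat) (f : nat) :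
  etale_cubic L -> (0 < f)%N -> squarefree f ->
  (forall p, prime p -> (p %| f)%N -> ~ type3 L p) ->
  forall F : L -> Prop, is_Ok_ideal F ->
  (forall x, Ok x -> F (f%:R * x)%R) ->
  ideal_norm_is F (f ^ 2)%N ->
  (is_order (Zplus F) /\ has_index (@Ok L) (Zplus F) f /\
     is_conductor (Zplus F) F) /\
  (forall R : L -> Prop, is_order R -> has_index (@Ok L) R f ->
     is_conductor R F -> forall x, R x <-> Zplus F x).
Proof.
move=> [hC _ _] f0 fsq _ F FI fF [t [_ [tOk tU]]].
have N0 : (0 < f ^ 2)%N by rewrite expn_gt0 f0.
have idx := index_Zplus hC FI N0 tOk tU f0 fsq fF erefl.
have ck := cond_key hC FI N0 tOk tU f0 fsq fF erefl.
have ZR : forall R : L -> Prop, is_order R -> is_conductor R F -> forall x, Zplus F x -> R x.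
  move=> R [_ R1 Rsub _ _] [_ FR _] x [z hz].
  have := Rsub _ _ (FR _ hz) (Rsub _ _ (R_int R1 Rsub 0) (R_int R1 Rsub z)).
  by rewrite mulr0z sub0r opprK subrK.
split; first split.
- split.
  + move=> x; exact: (@ZpOk L hC F FI x).
  + by have := Zp_int FI 1; rewrite mulr1z.
  + exact: ZpB FI.
  + move=> x y; exact: (@ZpM L hC F FI x y).
  + by exists f.
- split=> //.
  split=> //; first exact: ZpF.
  move=> I [IOk I0 Isub Imul] IZ x Ix.
  have [z hz] := IZ x Ix.
  rewrite -(subrK z%:~R x); apply: (FD FI) => //; apply: ck => a oa.
  have -> : z%:~R * a = a * x - a * (x - z%:~R).
    by rewrite mulrBr opprB addrCA subrr addr0 hC.
  apply: (ZpB FI); first by apply: IZ; apply: Imul.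
  by apply: ZpF; case: FI => _ _ _ h; apply: h.
move=> R ordR idxR condR x; split; last exact: ZR.
move=> Rx; apply: (index_sub hC f0 _ _ _ _ idx idxR) => //.
- exact: ZR.
- by case: ordR.
- by case: ordR.
- exact: ZpB FI.
Qed.

Unset Implicit Arguments.
Local Close Scope ring_scope.

Theorem proposition2p7 (L : falgType rat) (f : nat) :
  etale_cubic L -> (0 < f)%N -> squarefree f ->
  (forall p, prime p -> (p %| f)%N -> ~ type3 L p) ->
  forall F : L -> Prop, is_Ok_ideal F ->
  (forall x, Ok x -> F (f%:R * x)%R) ->
  ideal_norm_is F (f ^ 2)%N ->
  (is_order (Zplus F) /\ has_index (@Ok L) (Zplus F) f /\
     is_conductor (Zplus F) F) /\
  (forall R : L -> Prop, is_order R -> has_index (@Ok L) R f ->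
     is_conductor R F -> forall x, R x <-> Zplus F x).
Proof. exact: proposition2p7_aux. Qed.
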